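(* Let $q\colon L\to\mathbb Z$ be an integral quadratic form on a free abelian group $L$ of finite rank, with associated symmetric bilinear form $b$, and let $v\in L$ with $q(v)=\pm2$. Let $q'$ be the $v$-twist of $q$. Then $q$ and $q'$ have the same discriminant group (the cokernel of the correlation homomorphism $L\to L^*$). In particular, $q'$ is non-degenerate (respectively unimodular) if and only if $q$ is non-degenerate (respectively unimodular).
   Context: For $v\in L$ with $q(v)=\pm 2$, let $s_v\colon L\to L$ be the reflection $x\mapsto x-b(x,v)v$ if $q(v)=2$ and $x\mapsto x+b(x,v)v$ if $q(v)=-2$. The $v$-twist of $q$ is the integral quadratic form $q'(x)=b(x,s_vx)$; it is the unique integral quadratic form with $q'(v)=-q(v)$ and $q'(w)=q(w)$ for all $w$ orthogonal to $v$. *)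

(* Defs.v *)
(* The lattice L is Z^n = 'rV[int]_n; its dual L^* is
   identified with 'rV[int]_n via the dual basis. *)
From mathcomp Require Import all_boot all_order all_algebra.
Set Implicit Arguments. Unset Strict Implicit. Unset Printing Implicit Defensive.
Import Order.TTheory GRing.Theory Num.Theory.
Local Open Scope ring_scope.

Definition bil (n : nat) (B : 'M[int]_n) (x y : 'rV[int]_n) : int :=
  (x *m B *m y^T) 0 0.

(* Integral quadratic form q(x) = b(x,x) (convention forced by s_v v = -v). *)
Definition qf (n : nat) (B : 'M[int]_n) (x : 'rV[int]_n) : int := bil B x x.

(* Reflection s_v (meaningful when q(v) = 2 or q(v) = -2). *)
Definition refl (n : nat) (B : 'M[int]_n) (v x : 'rV[int]_n) : 'rV[int]_n :=
  if qf B v == 2 then x - bil B x v *: v else x + bil B x v *: v.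

(* Gram matrix of the v-twist: b'(x,y) = b(x, s_v y), so q'(x) = b(x, s_v x). *)
Definition twist (n : nat) (B : 'M[int]_n) (v : 'rV[int]_n) : 'M[int]_n :=
  \matrix_(i, j) bil B (delta_mx 0 i) (refl B v (delta_mx 0 j)).

Definition corr (n : nat) (B : 'M[int]_n) (x : 'rV[int]_n) : 'rV[int]_n :=
  x *m B.

(* Membership in the image of the correlation; the discriminant group is
   L^* / (image of corr). *)
Definition in_corr_image (n : nat) (B : 'M[int]_n) (y : 'rV[int]_n) : Prop :=
  exists x, y = corr B x.

Definition lat_nondegenerate (n : nat) (B : 'M[int]_n) : Prop := injective (corr B).
Definition lat_unimodular (n : nat) (B : 'M[int]_n) : Prop := bijective (corr B).

(* Main.v *)
Require Import Defs.
From mathcomp Require Import all_boot all_order all_algebra ring.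
Import Order.TTheory GRing.Theory Num.Theory.
Local Open Scope ring_scope.

Lemma dl n m (A : 'M[int]_(n,m)) i k : (delta_mx 0 i *m A) (0:'I_1) k = A i k.
Proof. by rewrite -rowE mxE. Qed.
Lemma dr n m (A : 'M[int]_(n,m)) j k : (A *m (delta_mx (0:'I_1) j)^T) k 0 = A k j.
Proof. by rewrite trmx_delta -colE mxE. Qed.
Lemma mB m p (A C : 'M[int]_(m,p)) i j : (A - C) i j = A i j - C i j.
Proof. by rewrite !mxE. Qed.
Lemma mZ m p (a : int) (A : 'M[int]_(m,p)) i j : (a *: A) i j = a * A i j.
Proof. by rewrite !mxE. Qed.
Lemma m1 p q (A : 'M[int]_(p,1)) (C : 'M[int]_(1,q)) i j : (A *m C) i j = A i 0 * C 0 j.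
Proof. by rewrite !mxE big_ord1. Qed.

Lemma key n (B : 'M[int]_n) v (e : int) (Bsym : B^T = B)
  (hr : forall x, refl B v x = x - (e * bil B x v) *: v) :
  twist B v = (1%:M - e *: (B *m v^T *m v)) *m B.
Proof.
apply/matrixP => i j; rewrite mxE hr /bil.
rewrite linearB /= linearZ /= mulmxBr -scalemxAr mB mZ dr.
rewrite -!mulmxA !dl mulmxBl mul1mx -scalemxAl mB mZ.
rewrite !mulmxA -(mulmxA (B *m v^T) v B) m1.
have -> : (v *m B) 0 j = (B *m v^T) j 0.
  by rewrite -[in RHS]Bsym -trmx_mul [RHS]mxE.
ring.
Qed.

Lemma transfer n (B1 B2 P : 'M[int]_n) (h : B2 = P *m B1) (hP : P *m P = 1%:M) :
  (forall y, in_corr_image B1 y -> in_corr_image B2 y) /\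
  (lat_nondegenerate B1 -> lat_nondegenerate B2) /\
  (lat_unimodular B1 -> lat_unimodular B2).
Proof.
have PP x : x *m P *m P = x by rewrite -mulmxA hP mulmx1.
rewrite /in_corr_image /lat_nondegenerate /lat_unimodular /corr h.
split; [|split].
- move=> y [x ->]; exists (x *m P); by rewrite mulmxA PP.
- move=> inj x y; rewrite !mulmxA => /inj /(congr1 (mulmx^~ P)); by rewrite !PP.
- case=> g g1 g2; exists (fun y => g y *m P).
  + move=> x /=; by rewrite mulmxA g1 PP.
  + move=> y /=; by rewrite mulmxA PP g2.
Qed.

Lemma Psq n (B : 'M[int]_n) v (e : int) (he : e * e = 1) (hq : e * qf B v = 2) :
  let P := 1%:M - e *: (B *m v^T *m v) in P *m P = 1%:M.
Proof.
move=> P.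
have hM : (B *m v^T *m v) *m (B *m v^T *m v) = qf B v *: (B *m v^T *m v).
  rewrite -!mulmxA [v *m (B *m _)]mulmxA [v *m B *m _]mulmxA.
  rewrite [v *m B *m v^T]mx11_scalar mul_scalar_mx -!scalemxAr.
  by rewrite /qf /bil.
rewrite /P mulmxBl mulmxBr !mul1mx mulmxBr mulmx1 -scalemxAl -scalemxAr hM.
rewrite !scalerA -mulrA hq mulr_natr -scalerMnl mulr2n.
by rewrite opprB addrK subrK.
Qed.

Theorem lemma2p6 (n : nat) (B : 'M[int]_n) (v : 'rV[int]_n)
  (Bsym : B^T = B) (hv : qf B v = 2 \/ qf B v = -2) :
  (forall y : 'rV[int]_n, in_corr_image B y <-> in_corr_image (twist B v) y) /\
  (lat_nondegenerate B <-> lat_nondegenerate (twist B v)) /\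
  (lat_unimodular B <-> lat_unimodular (twist B v)).
Proof.
have [e [he hq hr]] : exists e : int, [/\ e * e = 1, e * qf B v = 2 &
    forall x, refl B v x = x - (e * bil B x v) *: v].
  case: hv => hv.
    exists 1; split => //; first by rewrite hv.
    by move=> x; rewrite /refl hv eqxx mul1r.
  exists (-1); split => //; first by rewrite hv.
  by move=> x; rewrite /refl hv /= mulN1r scaleNr opprK.
have hT := @key n B v e Bsym hr.
have hP := @Psq n B v e he hq.
set P := 1%:M - _ in hT hP.
have hB : B = P *m twist B v by rewrite hT mulmxA hP mul1mx.
have [a1 [a2 a3]] := transfer _ _ _ _ hT hP.
have [b1 [b2 b3]] := transfer _ _ _ _ hB hP.
split; [|split] => //.
move=> y; split; [exact: a1|exact: b1].
Qed.
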